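(* For every integer $m\ge 4$, the commuting graph $\Gamma(H_m)$ of the group $H_m$ defined below is connected.
   Context: For an integer $m\ge 3$, let $V_m$ and $W_m$ be vector spaces over $\mathrm{GF}(2)$ of dimensions $m$ and $m-2$, with ordered bases $x_1,\dots,x_m$ and $y_1,\dots,y_{m-2}$ respectively. Let $f_m:V_m\times V_m\to W_m$ be the bilinear map determined on basis vectors by $f_m(x_i,x_j)=0$ if $j\in\{i,i+1\}$, $f_m(x_i,x_j)=y_{j-i-1}$ if $i+2\le j\le m$, and $f_m(x_i,x_j)=0$ if $i>j$. The group $H_m$ has underlying set $V_m\times W_m$ with multiplication $(a,b)\cdot(c,d)=(a+c,\ f_m(a,c)+b+d)$. For a group $G$, the commuting graph $\Gamma(G)$ is the graph whose vertices are the non-central elements of $G$, two distinct vertices being adjacent if and only if they commute in $G$. *)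

(* Defs.v *)
From HB Require Import structures.
From mathcomp Require Import all_boot all_order all_algebra.
Set Implicit Arguments. Unset Strict Implicit. Unset Printing Implicit Defensive.
Import GRing.Theory.
Local Open Scope ring_scope.

(* V_m = 'rV['F_2]_m with basis x_1..x_m the standard row
   vectors (0-indexed here: x_{i+1} <-> index i), W_m = 'rV['F_2]_(m-2) with
   y_{k+1} <-> index k.
   f_m(x_i, x_j) = y_{j-i-1} when i+2 <= j (1-indexed), i.e. with 0-indexed
   i, j, k : the coefficient on y_k is 1 iff j = i + k + 2.  Extended
   bilinearly: f_m(a,c)_k = sum_{i,j, j = i+k+2} a_i c_j. *)
Definition fm (m : nat) (a c : 'rV['F_2]_m) : 'rV['F_2]_(m - 2) :=
  \row_(k < m - 2) \sum_(i < m) \sum_(j < m | (j : nat) == (i + k + 2)%N)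
      a 0 i * c 0 j.

Definition Hm (m : nat) : finType :=
  ('rV['F_2]_m * 'rV['F_2]_(m - 2))%type.

Definition Hmul (m : nat) (x y : Hm m) : Hm m :=
  (x.1 + y.1, fm x.1 y.1 + x.2 + y.2).

Definition Hcommute (m : nat) (x y : Hm m) : bool := Hmul x y == Hmul y x.

Definition Hcentral (m : nat) (x : Hm m) : bool := [forall y, Hcommute x y].

Definition commuting_edge (m : nat) : rel (Hm m) :=
  fun x y => [&& ~~ Hcentral x, ~~ Hcentral y, x != y & Hcommute x y].

Definition commuting_graph_connected (m : nat) : Prop :=
  forall x y : Hm m, ~~ Hcentral x -> ~~ Hcentral y ->
    connect (@commuting_edge m) x y.

(* Main.v *)
Require Import Defs.
From mathcomp Require Import all_boot all_order all_algebra.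
Set Implicit Arguments. Unset Strict Implicit. Unset Printing Implicit Defensive.
Import GRing.Theory.
Local Open Scope ring_scope.

Definition N0 m (a : 'rV['F_2]_m) : 'M['F_2]_(m, m-2) :=
  \matrix_(i, k) ((\sum_(i' < m | (i:nat) == (i' + k + 2)%N) a 0 i')
     - \sum_(j < m | (j:nat) == (i + k + 2)%N) a 0 j).

Lemma N0E m (a c : 'rV['F_2]_m) : c *m N0 a = fm a c - fm c a.
Proof.
apply/rowP => k; rewrite !mxE.
under eq_bigr => i _ do rewrite mxE mulrBr !mulr_sumr.
rewrite sumrB; congr (_ - _).
rewrite (exchange_big_dep xpredT) //=; apply eq_bigr => i _; apply eq_bigr => j _; exact: mulrC.
Qed.
From mathcomp Require Import zify.

Lemma fm_hi m l (a c : 'rV['F_2]_m) (k : 'I_(m-2)) :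
  (forall i : 'I_m, (i < l)%N -> a 0 i = 0) ->
  (forall i : 'I_m, (i <= l)%N -> c 0 i = 0) -> (m <= k + l + 2)%N ->
  fm a c 0 k = 0 /\ fm c a 0 k = 0.
Proof.
move=> Ha Hc Hk; rewrite !mxE; split; apply: big1 => i _; apply: big1 => j /eqP Hj.
  case: (ltnP i l) => h; first by rewrite Ha // mul0r.
  have := ltn_ord j; lia.
case: (leqP i l) => h; first by rewrite Hc // mul0r.
have := ltn_ord j; lia.
Qed.

Lemma mul_pid_row n r (v : 'rV['F_2]_n) :
  (forall k : 'I_n, (r <= k)%N -> v 0 k = 0) -> v *m pid_mx r = v.
Proof.
move=> Hv; apply/rowP => k; rewrite !mxE (bigD1 k) //= big1 => [|j Hj].
  rewrite !mxE eqxx /=; case: (ltnP k r) => h; first by rewrite mulr1 addr0.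
  by rewrite Hv // mul0r addr0.
by move: Hj; rewrite !mxE -val_eqE => /negbTE -> /=; rewrite mulr0.
Qed.

Lemma ker_exists m l (a : 'rV['F_2]_m) : (l + 3 <= m)%N ->
  (forall i : 'I_m, (i < l)%N -> a 0 i = 0) ->
  exists c : 'rV['F_2]_m, [/\ c != 0, (forall i : 'I_m, (i <= l)%N -> c 0 i = 0)
     & fm a c = fm c a].
Proof.
move=> Hm Ha.
pose r := (m - l - 2)%N.
pose M := N0 a *m (pid_mx r : 'M['F_2]_(m-2)).
pose P := (pid_mx l.+1 : 'M['F_2]_(m, l.+1)).
pose B := row_mx M P.
have rB : (\rank B < m)%N.
  have -> : B = row_mx M 0 + row_mx 0 P by rewrite add_row_mx addr0 add0r.
  apply: leq_ltn_trans (mxrank_add _ _) _.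
  rewrite rank_row_mx0 rank_row_0mx.
  have h1 : (\rank M <= r)%N.
    apply: leq_trans (mxrankM_maxr _ _) _; rewrite rank_pid_mx //; lia.
  have h2 : (\rank P <= l.+1)%N := rank_leq_col P.
  lia.
have K0 : kermx B != 0 by rewrite -mxrank_eq0 mxrank_ker -lt0n subn_gt0.
have [i Hi] : exists i, row i (kermx B) != 0.
  case: (pickP (fun i => row i (kermx B) != 0)) => [i Hi|H]; first by exists i.
  case/negP: K0; apply/eqP/row_matrixP => i; rewrite row0; apply/eqP.
  by move: (H i) => /negbFE.
pose c := row i (kermx B).
have cB : c *m B = 0 by apply/sub_kermxP; exact: row_sub.
move: cB; rewrite mul_mx_row => /eqP; rewrite row_mx_eq0 => /andP [/eqP cM /eqP cP].
have Hc : forall j : 'I_m, (j <= l)%N -> c 0 j = 0.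
  move=> j Hj.
  have Hj' : (j < l.+1)%N by [].
  have := congr1 (fun v : 'rV['F_2]_l.+1 => v 0 (Ordinal Hj')) cP.
  rewrite !mxE (bigD1 j) //= big1 => [|j' Hj2].
    by rewrite !mxE eqxx /= Hj' mulr1 addr0.
  by move: Hj2; rewrite /P !mxE -val_eqE => /negbTE -> /=; rewrite mulr0.
exists c; split => //.
move: cM; rewrite /M mulmxA N0E mul_pid_row;
  first by move/eqP; rewrite subr_eq0 => /eqP.
move=> k Hk.
have [e1 e2] : fm a c 0 k = 0 /\ fm c a 0 k = 0 by apply: fm_hi Ha Hc _; lia.
have -> : (fm a c - fm c a) 0 k = fm a c 0 k - fm c a 0 k by rewrite !mxE.
by rewrite e1 e2 subr0.
Qed.

Lemma HcommuteE m (x y : Hm m) : Hcommute x y = (fm x.1 y.1 == fm y.1 x.1).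
Proof.
case: x y => a b [c d] /=; rewrite /Hcommute /Hmul /=.
apply/eqP/eqP => [[_ H]|H].
  by move: H; rewrite -!addrA [d + b]addrC => /addIr.
by rewrite H addrC -!addrA [d + b]addrC.
Qed.

Lemma fm0l m (c : 'rV['F_2]_m) : fm 0 c = 0.
Proof. by apply/rowP => k; rewrite !mxE big1 // => i _; rewrite big1 // => j _; rewrite mxE mul0r. Qed.
Lemma fm0r m (c : 'rV['F_2]_m) : fm c 0 = 0.
Proof. by apply/rowP => k; rewrite !mxE big1 // => i _; rewrite big1 // => j _; rewrite mxE mulr0. Qed.

Lemma central0 m (x : Hm m) : x.1 = 0 -> Hcentral x.
Proof.
move=> H; apply/forallP => y; rewrite HcommuteE H fm0l fm0r //.
Qed.

Lemma fm_er m (a : 'rV['F_2]_m) (j : 'I_m) (k : 'I_(m-2)) :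
  fm a (delta_mx 0 j) 0 k = \sum_(i < m | (j:nat) == (i + k + 2)%N) a 0 i.
Proof.
rewrite mxE [RHS]big_mkcond /=; apply: eq_bigr => i _.
case: ifP => h.
  rewrite (bigD1 j) //= big1 => [|j' /andP [_ Hj']].
    by rewrite !mxE !eqxx /= mulr1 addr0.
  by rewrite !mxE (negbTE Hj') /= mulr0.
rewrite big1 // => j' /eqP Hj'; rewrite !mxE eqxx /=.
case: (j' =P j) => [e|]; last by rewrite /= mulr0.
by move: h; rewrite -e Hj' eqxx.
Qed.

Lemma fm_el m (a : 'rV['F_2]_m) (j : 'I_m) (k : 'I_(m-2)) :
  fm (delta_mx 0 j) a 0 k = \sum_(i < m | (i:nat) == (j + k + 2)%N) a 0 i.
Proof.
rewrite mxE (bigD1 j) //= [X in _ + X]big1 => [|i Hi]; last first.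
  by rewrite big1 // => j' _; rewrite !mxE (negbTE Hi) /= mul0r.
rewrite addr0; apply: eq_bigr => i _; by rewrite !mxE !eqxx /= mul1r.
Qed.

Lemma noncentral m (x : Hm m) : (4 <= m)%N -> x.1 != 0 -> ~~ Hcentral x.
Proof.
case: x => a b /= Hm4 Ha.
have [i Hi] : exists i : 'I_m, a 0 i != 0.
  case: (pickP (fun i => a 0 i != 0)) => [i Hi|H]; first by exists i.
  case/negP: Ha; apply/eqP/rowP => i; rewrite mxE; apply/eqP; exact: negbFE (H i).
apply/forallPn.
case: (leqP i (m-3)) => hi.
  have hm : (m - 1 < m)%N by lia.
  have hk : (m - 3 - i < m - 2)%N by lia.
  exists (delta_mx 0 (Ordinal hm), 0); rewrite HcommuteE /=.
  apply/eqP => /rowP /(_ (Ordinal hk)).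
  rewrite fm_er fm_el (big_pred1 i) => [|i' /=]; last first.
    by apply/eqP/eqP => [h|->]; [apply/val_inj => /=; lia | lia].
  rewrite big_pred0 => [h|i' /=]; first by rewrite h eqxx in Hi.
  by apply: negbTE; apply/eqP => h; have := ltn_ord i'; lia.
have hm : (0 < m)%N by lia.
have hk : (i - 2 < m - 2)%N by have := ltn_ord i; lia.
exists (delta_mx 0 (Ordinal hm), 0); rewrite HcommuteE /=.
apply/eqP => /rowP /(_ (Ordinal hk)).
rewrite fm_er fm_el [RHS](big_pred1 i) => [|i' /=]; last first.
  by apply/eqP/eqP => [h|->]; [apply/val_inj => /=; lia | lia].
rewrite big_pred0 => [h|i' /=]; first by rewrite -h eqxx in Hi.
by apply: negbTE; apply/eqP => h; lia.
Qed.

Lemma edge_mk m (a c : 'rV['F_2]_m) b d : (4 <= m)%N -> a != 0 -> c != 0 ->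
  (a, b) != (c, d) -> fm a c = fm c a -> @commuting_edge m (a, b) (c, d).
Proof.
move=> H4 Ha Hc Hne Hf; rewrite /commuting_edge !noncentral //= Hne HcommuteE /=.
by rewrite Hf eqxx.
Qed.

Lemma edge_sym m : symmetric (@commuting_edge m).
Proof.
move=> x y; rewrite /commuting_edge /Hcommute [x == y]eq_sym [Hmul x y == _]eq_sym.
by case: (Hcentral x); case: (Hcentral y).
Qed.

Definition tvec m : 'rV['F_2]_m := \row_(i < m) ((i:nat) == (m - 1)%N)%:R.

Lemma reach m (H4 : (4 <= m)%N) :
  forall n l, (m - l <= n.+2)%N -> forall a : 'rV['F_2]_m, a != 0 ->
  (forall i : 'I_m, (i < l)%N -> a 0 i = 0) -> forall b,
  connect (@commuting_edge m) (a, b) (tvec m, 0).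
Proof.
have hm : ((m - 1)%N < m)%N by lia.
set t := tvec m.
elim => [|n IH] l Hl a Ha Hsupp b.
  have Hf : fm a t = fm t a.
    apply/rowP => k.
    have [e1 e2] : fm a t 0 k = 0 /\ fm t a 0 k = 0.
      apply: (@fm_hi m (m - 2)) => [i hi|i hi|]; last by lia.
        by apply: Hsupp; lia.
      rewrite /t mxE /= (_ : (i == (m - 1)%N :> nat) = false) //; apply: negbTE; apply/eqP; lia.
    by rewrite e1 e2.
  have t0 : t != 0.
    apply/eqP => /rowP /(_ (Ordinal hm)); rewrite /t !mxE !eqxx /= => /eqP.
    by rewrite oner_eq0.
  case: (eqVneq (a, b) (t, 0)) => [->|hne]; first exact: connect0.
  by apply: connect1; apply: edge_mk.
case: (leqP (m - l) n.+2) => hl; first exact: (IH l hl a Ha Hsupp b).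
have hl' : (m - l.+1 <= n.+2)%N by lia.
have hlm : (l < m)%N by lia.
case: (eqVneq (a 0 (Ordinal hlm)) 0) => hal.
  apply: (IH l.+1 hl' a Ha) => i hi.
  case: (ltnP i l) => h; first exact: Hsupp.
  by have -> : i = Ordinal hlm by apply/val_inj => /=; lia.
have hl3 : (l + 3 <= m)%N by lia.
have [c [Hc Hcs Hf]] := @ker_exists m l a hl3 Hsupp.
apply: connect_trans (IH l.+1 hl' c Hc _ 0); last first.
  by move=> i hi; apply: Hcs; lia.
apply: connect1; apply: edge_mk => //.
apply/eqP => [[e _]]; move: hal; rewrite e Hcs //= eqxx //.
Qed.

Theorem lemma2p2 (m : nat) : (4 <= m)%N -> commuting_graph_connected m.
Proof.
move=> H4 x y Hx Hy.
have nz : forall z : Hm m, ~~ Hcentral z -> z.1 != 0.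
  move=> z Hz; apply/eqP => h; by rewrite central0 in Hz.
have hmm : (m - 0 <= m.+2)%N by lia.
have cx := @reach m H4 m 0 hmm x.1 (nz x Hx) (fun i h => False_ind _ (notF h)) x.2.
have cy := @reach m H4 m 0 hmm y.1 (nz y Hy) (fun i h => False_ind _ (notF h)) y.2.
rewrite -surjective_pairing in cx; rewrite -surjective_pairing in cy.
apply: connect_trans cx _.
by rewrite (sym_connect_sym (@edge_sym m)).
Qed.
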